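(* For $\theta\in(0,1)$ define $P_0(\theta)=1-\theta$ and, for integers $r\ge 1$, \[ P_r(\theta)=r(1-\theta)\sum_{i=r}^{\infty}\frac{\theta^i}{i}. \] Then for each $r\ge 1$, the points $\theta\in(0,1)$ at which $P_{r-1}(\theta)=P_r(\theta)$ are exactly the points at which $\frac{d}{d\theta}P_r(\theta)=0$; that is, the intersection of $P_{r-1}$ and $P_r$ coincides with the location of the maximum value of $P_r$ on $(0,1)$. *)

(* Defs.v *)
From Stdlib Require Import Reals Lra Lia.
From Coquelicot Require Import Coquelicot.
Open Scope R_scope.

Definition tail_term (r : nat) (theta : R) (i : nat) : R :=
  if (i <? r)%nat then 0 else theta ^ i / INR i.

Definition P (r : nat) (theta : R) : R :=
  match r with
  | O => 1 - theta
  | S _ => INR r * (1 - theta) * Series (tail_term r theta)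
  end.

(* Main.v *)
Require Import Defs.
From Stdlib Require Import Reals Lra Lia.
From Coquelicot Require Import Coquelicot.
Open Scope R_scope.

Definition ca (r : nat) (n : nat) : R := if (n <? r)%nat then 0 else / INR n.

Lemma tt_eq r x n : tail_term r x n = ca r n * x ^ n.
Proof. unfold tail_term, ca. destruct (n <? r)%nat; unfold Rdiv; ring. Qed.

Lemma rad r : (1 <= r)%nat -> forall x, 0 <= x < 1 -> Rbar_lt (Rabs x) (CV_radius (ca r)).
Proof.
  intros hr x [hx0 hx1].
  set (y := (x + 1) / 2).
  assert (Hy : exists M : R, forall n : nat, Rabs (ca r n * y ^ n) <= M).
  { exists 1. intros n. unfold ca.
    destruct (Nat.ltb_spec n r).
    - rewrite Rmult_0_l, Rabs_R0; lra.
    - assert (H1 : 1 <= INR n) by (apply (le_INR 1); lia).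
      assert (H2 : 0 < / INR n <= 1).
      { split. apply Rinv_0_lt_compat; lra.
        rewrite <- Rinv_1. apply Rinv_le_contravar; lra. }
      assert (H3 : 0 <= y ^ n <= 1).
      { split. apply pow_le; unfold y; lra. rewrite <- (pow1 n). apply pow_incr; unfold y; lra. }
      rewrite Rabs_pos_eq by nra. nra. }
  destruct (CV_radius_bounded (ca r)) as [ub _].
  apply Rbar_lt_le_trans with (Finite y).
  - simpl. rewrite Rabs_pos_eq by lra. unfold y; lra.
  - apply ub. exact Hy.
Qed.

Lemma geomtail m x : Rabs x < 1 ->
  is_series (fun n => if (n <? m)%nat then 0 else x ^ n) (x ^ m / (1 - x)).
Proof.
  intros hx. assert (1 - x <> 0) by (apply Rabs_lt_between in hx; lra).
  induction m.
  - eapply is_series_ext. 2: { rewrite pow_O. unfold Rdiv. rewrite Rmult_1_l. apply is_series_geom; auto. }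
    intros n. reflexivity.
  - apply is_series_decr_1.
    match goal with |- is_series _ ?l => replace l with (x * (x ^ m / (1 - x))) end.
    2: { simpl. unfold plus, opp; simpl. rewrite Ropp_0, Rplus_0_r. unfold Rdiv. ring. }
    eapply is_series_ext. 2: apply (is_series_scal_l x _ _ IHm).
    intros n. simpl. unfold scal; simpl. unfold mult; simpl.
    change (S n <? S m)%nat with (n <? m)%nat. destruct (n <? m)%nat; ring.
Qed.

Lemma is_series_eqv (a : nat -> R) (l l' : R) : is_series a l -> l = l' -> is_series a l'.
Proof. intros H E; subst; exact H. Qed.

Lemma zero_series : is_series (fun _ : nat => 0) 0.
Proof.
  pose proof (is_series_scal_l 0 _ _ (is_series_geom (1/2) ltac:(rewrite Rabs_pos_eq; lra))) as H.
  eapply is_series_ext. 2: (eapply is_series_eqv; [exact H|]).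
  2: unfold scal; simpl; unfold mult; simpl; ring.
  intros n. unfold scal; simpl; unfold mult; simpl. ring.
Qed.

Lemma bump_series j (v : R) : is_series (fun n => if (n =? j)%nat then v else 0) v.
Proof.
  induction j.
  - apply is_series_decr_1. simpl.
    eapply is_series_eqv. apply zero_series. unfold plus, opp; simpl. ring.
  - apply is_series_decr_1. simpl.
    eapply is_series_eqv. apply IHj. unfold plus, opp; simpl. ring.
Qed.

Lemma ex_tail r x : (1 <= r)%nat -> 0 <= x < 1 -> ex_series (tail_term r x).
Proof.
  intros hr hx. pose proof (CV_radius_inside (ca r) x (rad r hr x hx)) as H.
  unfold ex_pseries in H. eapply ex_series_ext. 2: exact H.
  intros n. rewrite tt_eq. unfold scal; simpl; unfold mult; simpl.
  rewrite pow_n_pow; apply Rmult_comm.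
Qed.

Lemma relS m x : 0 <= x < 1 ->
  Series (tail_term (S m) x) = x ^ S m / INR (S m) + Series (tail_term (S (S m)) x).
Proof.
  intros hx. apply is_series_unique.
  eapply is_series_ext.
  2: { apply (is_series_plus _ _ _ _ (bump_series (S m) (x ^ S m / INR (S m)))
          (Series_correct _ (ex_tail (S (S m)) x ltac:(lia) hx))). }
  intros n. unfold plus; simpl. unfold tail_term.
  destruct (Nat.eqb_spec n (S m)); destruct (Nat.ltb_spec n (S m));
    destruct (Nat.ltb_spec n (S (S m))); try lia; try (subst n; simpl; ring); ring.
Qed.

Lemma is_derive_eqv (f : R -> R) (x l l' : R) : is_derive f x l -> l = l' -> is_derive f x l'.
Proof. intros H E; subst; exact H. Qed.

Lemma pt m x n : (if (n <? m)%nat then 0 else x ^ n) = PS_derive (ca (S m)) n * x ^ n.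
Proof.
  unfold PS_derive, ca. change (S n <? S m)%nat with (n <? m)%nat.
  destruct (n <? m)%nat; [ring|]. field. apply not_0_INR. lia.
Qed.

Lemma dS m x : 0 < x < 1 ->
  is_derive (fun t => Series (tail_term (S m) t)) x (x ^ m / (1 - x)).
Proof.
  intros hx.
  apply is_derive_ext with (PSeries (ca (S m))).
  { intros t. unfold PSeries. apply Series_ext. intros n. symmetry. apply tt_eq. }
  assert (E : PSeries (PS_derive (ca (S m))) x = x ^ m / (1 - x)).
  { unfold PSeries. apply is_series_unique. eapply is_series_ext.
    2: apply (geomtail m x); rewrite Rabs_pos_eq; lra.
    intros n. apply pt. }
  rewrite <- E. apply is_derive_PSeries, rad. lia. lra.
Qed.

Lemma dP m x : 0 < x < 1 ->
  is_derive (P (S m)) x (INR (S m) * (x ^ m - Series (tail_term (S m) x))).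
Proof.
  intros hx.
  apply is_derive_ext with (fun t => (INR (S m) * (1 - t)) * Series (tail_term (S m) t)).
  { intros t. reflexivity. }
  assert (H1 : is_derive (fun t => INR (S m) * (1 - t)) x (- INR (S m))).
  { auto_derive. auto. destruct m; simpl; ring. }
  pose proof (is_derive_mult _ _ x _ _ H1 (dS m x hx) Rmult_comm) as H.
  eapply is_derive_eqv. exact H.
  unfold plus, mult; simpl. field. lra.
Qed.

Lemma Pdiff m x : 0 <= x < 1 ->
  P m x - P (S m) x = (1 - x) * (x ^ m - Series (tail_term (S m) x)).
Proof.
  intros hx. destruct m.
  - unfold P. simpl. ring.
  - unfold P. rewrite (relS m x hx). rewrite (S_INR (S m)).
    field. apply not_0_INR. lia.
Qed.

Theorem lemma3p1 (r : nat) (hr : (1 <= r)%nat) (theta : R)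
  (h0 : 0 < theta) (h1 : theta < 1) :
  P (r - 1) theta = P r theta <-> is_derive (P r) theta 0.
Proof.
  destruct r as [|r]; [lia|].
  replace (S r - 1)%nat with r by lia.
  pose proof (dP r theta ltac:(lra)) as D.
  pose proof (Pdiff r theta ltac:(lra)) as Df.
  assert (HI : INR (S r) <> 0) by (apply not_0_INR; lia).
  split.
  - intro Heq.
    assert (Z : theta ^ r - Series (tail_term (S r) theta) = 0).
    { assert (Z1 : (1 - theta) * (theta ^ r - Series (tail_term (S r) theta)) = 0) by lra.
      apply Rmult_integral in Z1. destruct Z1; [lra|auto]. }
    eapply is_derive_eqv. exact D. rewrite Z. ring.
  - intro H0.
    apply is_derive_unique in H0. apply is_derive_unique in D.
    assert (Z1 : INR (S r) * (theta ^ r - Series (tail_term (S r) theta)) = 0) by congruence.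
    apply Rmult_integral in Z1. destruct Z1 as [Z|Z]; [contradiction|].
    rewrite Z, Rmult_0_r in Df. lra.
Qed.
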